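(* Let $\mathbb{F}$ be a field, $X$ a finite set, $I$ an ideal of the free associative algebra $\mathbb{F}\langle X\rangle$, and $A=\mathbb{F}\langle X\rangle/I$. Let $<$ be a monomial order on $X^*$ and let $\widetilde{A_<}$ be the associated monomial algebra of $A$ with respect to $<$. Suppose there exist a real polynomial $f(x)$ of degree $d\ge 1$ and an integer $N$ such that for all $u,v\in X^*$ with $|u|\ge N$, $$u<v \implies |u|\le f(|v|).$$ Then $$\operatorname{GKdim}(\widetilde{A_<})\le \operatorname{GKdim}(A)\le d\cdot \operatorname{GKdim}(\widetilde{A_<}).$$
   Context: All algebras are associative and unital over a field $\mathbb{F}$. $X^*$ is the free monoid on $X$ (words, with empty word $1$), and $|u|$ denotes the length of a word $u$. A monomial order on $X^*$ is a well order $<$ on $X^*$ such that $u<v$ implies $w_1uw_2<w_1vw_2$ for all $w_1,w_2\in X^*$. For $0\ne g\in\mathbb{F}\langle X\rangle$, $\overline{g}$ denotes its leading monomial, i.e. the $<$-largest word appearing in $g$ with nonzero coefficient. For an ideal $I$, $\overline{I}=\{\overline{g}\mid 0\neq g\in I\}$, and the associated monomial algebra of $A=\mathbb{F}\langle X\rangle/I$ with respect to $<$ is $\widetilde{A_<}=\mathbb{F}\langle X\rangle/J$, where $J$ is the ideal generated by $\overline{I}$. $\operatorname{GKdim}$ denotes Gelfand–Kirillov dimension. *)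

(* Defs.v *)
From Stdlib Require Import Reals ClassicalEpsilon.
From Coquelicot Require Import Rbar Lim_seq.
From HB Require Import structures.
From mathcomp Require Import all_boot all_algebra.
Set Implicit Arguments. Unset Strict Implicit. Unset Printing Implicit Defensive.
Import GRing.Theory.

Section FreeAlgebra.
Variables (F : fieldType) (X : finType).
Local Open Scope ring_scope.

Definition word := seq X.

(* Elements of F<X> : functions X^* -> F (coefficient of each word);
   genuine elements of F<X> are those of finite support. *)
Definition ncpoly := word -> F.

Definition fin_supp (p : ncpoly) : Prop :=
  exists s : seq word, forall w, w \notin s -> p w = 0.

Definition nc_zero : ncpoly := fun _ => 0.
Definition nc_add (p q : ncpoly) : ncpoly := fun w => p w + q w.
Definition nc_mul (p q : ncpoly) : ncpoly :=
  fun w => \sum_(i < (size w).+1) p (take i w) * q (drop i w).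
Definition nc_mon (u : word) : ncpoly := fun w => (w == u)%:R.

Definition is_ideal (K : ncpoly -> Prop) : Prop :=
  [/\ (forall p, K p -> fin_supp p),
      K nc_zero,
      (forall p q, K p -> K q -> K (nc_add p q)),
      (forall p q, fin_supp p -> K q -> K (nc_mul p q)) &
      (forall p q, K p -> fin_supp q -> K (nc_mul p q))].

Definition monomial_order (lt : word -> word -> Prop) : Prop :=
  [/\ (forall u, ~ lt u u),
      (forall u v w, lt u v -> lt v w -> lt u w),
      (forall u v, [\/ lt u v, u = v | lt v u]),
      well_founded lt &
      (forall u v w1 w2, lt u v -> lt (w1 ++ u ++ w2) (w1 ++ v ++ w2))].

Definition leading_monomial (lt : word -> word -> Prop) (g : ncpoly) (u : word) : Prop :=
  g u != 0 /\ (forall w, g w != 0 -> w <> u -> lt w u).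

Definition lead_set (lt : word -> word -> Prop) (K : ncpoly -> Prop) (u : word) : Prop :=
  exists g, K g /\ leading_monomial lt g u.

Definition gen_ideal (S : word -> Prop) (p : ncpoly) : Prop :=
  forall K, is_ideal K -> (forall u, S u -> K (nc_mon u)) -> K p.

(* J = ideal generated by \overline{I}; the associated monomial algebra is F<X>/J *)
Definition assoc_monomial_ideal (lt : word -> word -> Prop) (K : ncpoly -> Prop) :=
  gen_ideal (lead_set lt K).

(* p lies in the span of the words of length <= n, i.e. in V^n, V = F + span X *)
Definition deg_le (n : nat) (p : ncpoly) : Prop :=
  forall w, (n < size w)%N -> p w = 0.

Definition lin_comb (c : nat -> F) (ps : seq ncpoly) : ncpoly :=
  fun w => \sum_(i < size ps) c i * (nth nc_zero ps i) w.

Definition indep_mod (K : ncpoly -> Prop) (ps : seq ncpoly) : Prop :=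
  forall c, K (lin_comb c ps) -> forall i, (i < size ps)%N -> c i = 0.

(* k = dim_F of the image of V^n in F<X>/K *)
Definition is_quot_filt_dim (K : ncpoly -> Prop) (n k : nat) : Prop :=
  (exists ps, size ps = k /\ (forall p, List.In p ps -> deg_le n p) /\ indep_mod K ps) /\
  (forall ps, (forall p, List.In p ps -> deg_le n p) -> indep_mod K ps -> (size ps <= k)%N).

Definition quot_filt_dim (K : ncpoly -> Prop) (n : nat) : nat :=
  epsilon (inhabits 0%N) (is_quot_filt_dim K n).

Definition GKdim (K : ncpoly -> Prop) : Rbar :=
  LimSup_seq (fun n => Rdiv (ln (INR (quot_filt_dim K n))) (ln (INR n))).

End FreeAlgebra.

Definition real_poly_eval (a : nat -> R) (d : nat) (x : R) : R :=
  sum_f_R0 (fun i => Rmult (a i) (pow x i)) d.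

(* Main.v *)
Require Import Defs.
From Stdlib Require Import Reals Classical ClassicalEpsilon FunctionalExtensionality Lra.
From Coquelicot Require Import Rbar Lim_seq.
From HB Require Import structures.
From mathcomp Require Import all_boot all_algebra zify.
Set Implicit Arguments. Unset Strict Implicit. Unset Printing Implicit Defensive.
Import GRing.Theory.

Section Alg.
Variables (F : fieldType) (X : finType).
Local Open Scope ring_scope.
Notation P := (ncpoly F X).
Notation W := (word X).

Lemma lin_comb_cons (c : nat -> F) (p : P) ps w :
  lin_comb c (p :: ps) w = c 0%N * p w + lin_comb (fun i => c i.+1) ps w.
Proof. by rewrite /lin_comb /= big_ord_recl. Qed.

Lemma lin_comb_nil (c : nat -> F) w : lin_comb c ([::] : seq P) w = 0.
Proof. by rewrite /lin_comb big_ord0. Qed.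

Lemma mul_scal_monl (c : F) (a : W) (q : P) w :
  nc_mul (fun u => c * nc_mon F a u) q w =
  if take (size a) w == a then c * q (drop (size a) w) else 0.
Proof.
rewrite /nc_mul /nc_mon.
case: eqP => Ht.
  have Ha : (size a < (size w).+1)%N.
    by rewrite ltnS -Ht size_take; case: ltnP => // /ltnW.
  rewrite (bigD1 (Ordinal Ha)) //= Ht eqxx mulr1 big1 ?addr0 // => i Hi.
  case: eqP; rewrite ?mulr0 ?mul0r // => Hia.
  exfalso; move: Hi; apply/negP; rewrite negbK; apply/eqP/val_inj => /=.
  have : size (take i w) = size (take (size a) w) by rewrite Hia Ht.
  rewrite !size_take; have := ltn_ord i; rewrite ltnS => Hiw.
  have Haw : (size a <= size w)%N by rewrite -ltnS.
  case: ltnP => H1; case: ltnP => H2 //; lia.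
rewrite big1 // => i _; case: eqP; rewrite ?mulr0 ?mul0r // => Hia.
exfalso; apply: Ht; have : size (take i w) = size a by rewrite Hia.
rewrite size_take => Hs.
have := ltn_ord i; rewrite ltnS => Hiw.
have -> : size a = i by move: Hs; case: ltnP => H1 Hs; lia.
exact: Hia.
Qed.

Lemma mul_monl (a : W) (q : P) w :
  nc_mul (nc_mon F a) q w = if take (size a) w == a then q (drop (size a) w) else 0.
Proof.
have -> : nc_mon F a = (fun u => 1 * nc_mon F a u) by apply: functional_extensionality => u; rewrite mul1r.
by rewrite mul_scal_monl; case: ifP; rewrite ?mul1r.
Qed.

Lemma mul_monr (b : W) (q : P) w :
  nc_mul q (nc_mon F b) w =
  if drop (size w - size b) w == b then q (take (size w - size b) w) else 0.
Proof.
rewrite /nc_mul /nc_mon.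
case: eqP => Ht.
  have Ha : (size w - size b < (size w).+1)%N by rewrite ltnS leq_subr.
  rewrite (bigD1 (Ordinal Ha)) //= Ht eqxx mulr1 big1 ?addr0 // => i Hi.
  case: eqP; rewrite ?mulr0 ?mul0r // => Hia.
  exfalso; move: Hi; apply/negP; rewrite negbK; apply/eqP/val_inj => /=.
  have : size (drop i w) = size (drop (size w - size b) w) by rewrite Hia Ht.
  rewrite !size_drop; have := ltn_ord i; rewrite ltnS => Hiw.
  have : size (drop (size w - size b) w) = size b by rewrite Ht.
  rewrite size_drop => Hb. lia.
rewrite big1 // => i _; case: eqP; rewrite ?mulr0 ?mul0r // => Hia.
exfalso; apply: Ht; have : size (drop i w) = size b by rewrite Hia.
rewrite size_drop => Hs.
have := ltn_ord i; rewrite ltnS => Hiw.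
have -> : (size w - size b)%N = i by lia.
exact: Hia.
Qed.

Lemma mon_cat (u v : W) : nc_mul (nc_mon F u) (nc_mon F v) = nc_mon F (u ++ v).
Proof.
apply: functional_extensionality => w; rewrite mul_monl /nc_mon.
case: (w =P u ++ v) => Hw.
  by rewrite Hw take_size_cat // eqxx drop_size_cat // eqxx.
case: eqP => Ht //; case: eqP => Hd //; exfalso; apply: Hw.
by rewrite -(cat_take_drop (size u) w) Ht Hd.
Qed.

Lemma fin_supp_mon (u : W) : fin_supp (nc_mon F u).
Proof.
exists [:: u] => w; rewrite inE /nc_mon => /negbTE ->; by [].
Qed.

Lemma fin_supp_add (p q : P) : fin_supp p -> fin_supp q -> fin_supp (nc_add p q).
Proof.
move=> [s1 H1] [s2 H2]; exists (s1 ++ s2) => w; rewrite mem_cat negb_or => /andP [h1 h2].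
by rewrite /nc_add H1 // H2 // addr0.
Qed.

Lemma fin_supp_mul (p q : P) : fin_supp p -> fin_supp q -> fin_supp (nc_mul p q).
Proof.
move=> [s1 H1] [s2 H2]; exists [seq u ++ v | u <- s1, v <- s2] => w Hw.
rewrite /nc_mul big1 // => i _.
case: (boolP (take i w \in s1)) => h1; last by rewrite H1 // mul0r.
case: (boolP (drop i w \in s2)) => h2; last by rewrite H2 // mulr0.
exfalso; move/negP: Hw; apply; rewrite -(cat_take_drop i w).
by apply/allpairsP; exists (take i w, drop i w).
Qed.

Lemma fin_supp_ext (p q : P) : fin_supp p -> (forall w, p w = q w) -> fin_supp q.
Proof. by move=> [s H] E; exists s => w Hw; rewrite -E H. Qed.

Lemma LA (rs : seq P) (Ws : seq W) :
  (forall i w, (i < size rs)%N -> w \notin Ws -> nth (@nc_zero F X) rs i w = 0) ->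
  (size Ws < size rs)%N ->
  exists c : nat -> F, (exists i, (i < size rs)%N /\ c i <> 0) /\ forall w, lin_comb c rs w = 0.
Proof.
move=> Hsupp Hsz.
set k := size rs; set m := size Ws.
pose M : 'M[F]_(k, m) := \matrix_(i, j) nth (@nc_zero F X) rs i (nth [::] Ws j).
have Hnf : ~~ row_free M by rewrite -row_leq_rank -ltnNge; apply: leq_ltn_trans (rank_leq_col M) Hsz.
have HK : kermx M != 0 by rewrite kermx_eq0.
have [i0 [j0 Hij]] : exists i j, kermx M i j <> 0.
  apply: NNPP => H; apply: (negP HK); apply/eqP/matrixP => i j; rewrite [RHS]mxE.
  by apply: NNPP => H'; apply: H; exists i, j.
exists (fun l => if (l < k)%N then kermx M i0 (insubd j0 l) else 0); split.
  by exists j0; rewrite ltn_ord valKd.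
move=> w; rewrite /lin_comb.
case: (boolP (w \in Ws)) => Hw.
  have Hj : (index w Ws < m)%N by rewrite index_mem.
  have HE : (kermx M *m M) i0 (Ordinal Hj) = 0 by rewrite mulmx_ker mxE.
  rewrite -[RHS]HE mxE.
  apply: eq_bigr => l _; rewrite ltn_ord valKd [M l _]mxE /= nth_index //.
rewrite big1 // => l _; by rewrite Hsupp // mulr0.
Qed.

End Alg.

Section Alg.
Variables (F : fieldType) (X : finType).
Local Open Scope ring_scope.
Notation P := (ncpoly F X).
Notation W := (word X).
Notation z0 := (@nc_zero F X).

Section Ideal.
Variable K : P -> Prop.
Hypothesis HK : is_ideal K.

Lemma K_ext (p q : P) : K p -> (forall w, p w = q w) -> K q.
Proof. by move=> Kp E; have <- : p = q by apply: functional_extensionality. Qed.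

Lemma K_fs p : K p -> fin_supp p.
Proof. by case: HK => H _ _ _ _; apply: H. Qed.

Lemma K_zero : K z0.
Proof. by case: HK. Qed.

Lemma K_zero' (p : P) : (forall w, p w = 0) -> K p.
Proof. move=> H; apply: K_ext K_zero _ => w; by rewrite H. Qed.

Lemma K_add (p q : P) : K p -> K q -> K (fun w => p w + q w).
Proof. by case: HK => _ _ H _ _; apply: H. Qed.

Lemma K_mull (p q : P) : fin_supp p -> K q -> K (nc_mul p q).
Proof. by case: HK => _ _ _ H _; apply: H. Qed.

Lemma K_mulr (p q : P) : K p -> fin_supp q -> K (nc_mul p q).
Proof. by case: HK => _ _ _ _ H; apply: H. Qed.

Lemma K_scale (c : F) (q : P) : K q -> K (fun w => c * q w).
Proof.
move=> Kq; apply: K_ext (K_mull (p := fun u => c * nc_mon F [::] u) _ Kq) _ => [|w].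
  by exists [:: [::]] => w; rewrite inE /nc_mon => /negbTE ->; rewrite mulr0.
by rewrite mul_scal_monl take0 drop0 eqxx.
Qed.

Lemma K_sub (p q : P) : K p -> K q -> K (fun w => p w - q w).
Proof.
move=> Kp Kq; apply: K_ext (K_add Kp (K_scale (-1) Kq)) _ => w.
by rewrite mulN1r.
Qed.

Lemma K_lin_comb (c : nat -> F) (qs : seq P) :
  (forall i, (i < size qs)%N -> K (nth z0 qs i)) -> K (lin_comb c qs).
Proof.
elim: qs c => [|q qs IH] c H.
  by apply: K_zero' => w; rewrite lin_comb_nil.
apply: K_ext (K_add (K_scale (c 0%N) (H 0%N isT)) (IH (fun i => c i.+1) _)) _.
  by move=> i Hi; apply: (H i.+1).
by move=> w; rewrite lin_comb_cons.
Qed.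

Lemma K_lin_comb_diff (c : nat -> F) (ps rs : seq P) :
  size ps = size rs ->
  (forall i, (i < size ps)%N -> K (fun w => nth z0 ps i w - nth z0 rs i w)) ->
  K (fun w => lin_comb c ps w - lin_comb c rs w).
Proof.
elim: ps rs c => [|p ps IH] [|r rs] c //= Hs H.
  by apply: K_zero' => w; rewrite !lin_comb_nil subrr.
case: Hs => Hs.
apply: K_ext (K_add (K_scale (c 0%N) (H 0%N isT)) (IH rs (fun i => c i.+1) Hs _)) _.
  by move=> i Hi; apply: (H i.+1).
move=> w; rewrite !lin_comb_cons /=.
by rewrite mulrBr opprD addrACA.
Qed.

End Ideal.
End Alg.

Section Alg.
Variables (F : fieldType) (X : finType).
Local Open Scope ring_scope.
Notation P := (ncpoly F X).
Notation W := (word X).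
Notation z0 := (@nc_zero F X).

Lemma choose_rs (Q : P -> Prop) (R : P -> P -> Prop) (ps : seq P) :
  (forall p, Q p -> exists r, R p r) -> (forall p, List.In p ps -> Q p) ->
  exists rs : seq P, size rs = size ps /\ forall i, (i < size ps)%N -> R (nth z0 ps i) (nth z0 rs i).
Proof.
move=> H; elim: ps => [|p ps IH] Hin; first by exists [::].
have [r Hr] := H p (Hin p (or_introl erefl)).
have [rs [Hs Hrs]] := IH (fun q Hq => Hin q (or_intror Hq)).
exists (r :: rs); split; first by rewrite /= Hs.
by case=> [|i] //= Hi; apply: Hrs.
Qed.

Lemma red_bound (K : P -> Prop) (Ws : seq W) (ps : seq P) :
  is_ideal K -> indep_mod K ps ->
  (exists rs : seq P, size rs = size ps /\ forall i, (i < size ps)%N ->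
     K (fun w => nth z0 ps i w - nth z0 rs i w) /\ forall w, w \notin Ws -> nth z0 rs i w = 0) ->
  (size ps <= size Ws)%N.
Proof.
move=> HK Hind [rs [Hs Hrs]]; rewrite leqNgt; apply/negP => Hlt.
have [c [[i [Hi Hci]] Hc]] : exists c : nat -> F, (exists i, (i < size rs)%N /\ c i <> 0) /\ forall w, lin_comb c rs w = 0.
  apply: (LA (rs:=rs) (Ws:=Ws)); last by rewrite Hs.
  by move=> i w Hi Hw; rewrite Hs in Hi; case: (Hrs i Hi) => _ ->.
apply: Hci; apply: (Hind c); last by rewrite -Hs.
have H1 := K_lin_comb_diff HK c (esym Hs) (fun i Hi => proj1 (Hrs i Hi)).
apply: (K_ext H1) => w.
by rewrite Hc subr0.
Qed.

Fixpoint words_len (k : nat) : seq W :=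
  if k is k'.+1 then [seq x :: w | x <- enum X, w <- words_len k'] else [:: [::]].

Lemma mem_words_len k w : (w \in words_len k) = (size w == k).
Proof.
elim: k w => [|k IH] [|x w] //=.
  by apply/negbTE/negP => /allpairsP [[a b] /= [_ _ E]].
apply/allpairsP/idP => [[[a b] /= [_ Hb [Ex Ew]]]|Hs].
  by rewrite eqSS -IH Ew.
by exists (x, w) => /=; rewrite mem_enum IH -eqSS.
Qed.

Definition words_upto (n : nat) : seq W :=
  undup (flatten [seq words_len k | k <- iota 0 n.+1]).

Lemma mem_words_upto n w : (w \in words_upto n) = (size w <= n)%N.
Proof.
rewrite mem_undup; apply/flattenP/idP => [[s /mapP [k Hk ->]]|Hw].
  by rewrite mem_words_len => /eqP ->; move: Hk; rewrite mem_iota add0n ltnS.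
exists (words_len (size w)); last by rewrite mem_words_len.
by apply/mapP; exists (size w) => //; rewrite mem_iota add0n ltnS.
Qed.

Lemma uniq_words_upto n : uniq (words_upto n).
Proof. exact: undup_uniq. Qed.

Lemma deg_le_out n (p : P) w : deg_le n p -> w \notin words_upto n -> p w = 0.
Proof. by move=> Hp; rewrite mem_words_upto -ltnNge => /Hp. Qed.

Definition good_fam (K : P -> Prop) n (ps : seq P) :=
  (forall p, List.In p ps -> deg_le n p) /\ indep_mod K ps.

Lemma In_nth (ps : seq P) i : (i < size ps)%N -> List.In (nth z0 ps i) ps.
Proof.
elim: ps i => [|p ps IH] [|i] //= Hi; first by left.
by right; apply: IH.
Qed.

Lemma good_bound (K : P -> Prop) n ps : is_ideal K -> good_fam K n ps ->
  (size ps <= size (words_upto n))%N.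
Proof.
move=> HK [Hdeg Hind]; apply: (red_bound HK Hind).
exists ps; split => // i Hi; split.
  by apply: (K_zero' HK) => w; rewrite subrr.
by move=> w; apply: deg_le_out; apply: Hdeg; apply: In_nth.
Qed.

Definition bdec (Q : Prop) : bool := if excluded_middle_informative Q then true else false.
Lemma bdecP (Q : Prop) : bdec Q <-> Q.
Proof. by rewrite /bdec; case: excluded_middle_informative. Qed.

Lemma dim_exists (K : P -> Prop) n : is_ideal K -> exists k, is_quot_filt_dim K n k.
Proof.
move=> HK.
pose Pb k := bdec (exists ps, size ps = k /\ good_fam K n ps).
have exP : exists i, Pb i.
  exists 0%N; apply/bdecP; exists [::]; split => //; split => // c _ i.
have ubP : forall i, Pb i -> (i <= size (words_upto n))%N.
  move=> i Hi; have [ps [<- Hg]] := (proj1 (bdecP _) Hi); exact: good_bound HK Hg.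
case: (ex_maxnP exP ubP) => k /bdecP [ps [Hs [Hd Hi]]] Hmax.
exists k; split; first by exists ps.
move=> qs Hd' Hi'; apply: Hmax; apply/bdecP; by exists qs.
Qed.

Lemma dim_spec (K : P -> Prop) n : is_ideal K -> is_quot_filt_dim K n (quot_filt_dim K n).
Proof.
move=> HK; rewrite /quot_filt_dim.
exact: (epsilon_spec (inhabits 0%N) (is_quot_filt_dim K n) (dim_exists n HK)).
Qed.

Lemma dim_lb (K : P -> Prop) n ps : is_ideal K ->
  (forall p, List.In p ps -> deg_le n p) -> indep_mod K ps ->
  (size ps <= quot_filt_dim K n)%N.
Proof. by move=> HK Hd Hi; case: (dim_spec n HK) => _; apply. Qed.

Lemma dim_ub (K : P -> Prop) n (Ws : seq W) : is_ideal K ->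
  (forall p, deg_le n p -> exists r : P, K (fun w => p w - r w) /\ forall w, w \notin Ws -> r w = 0) ->
  (quot_filt_dim K n <= size Ws)%N.
Proof.
move=> HK Hred; case: (dim_spec n HK) => [[ps [<- [Hd Hi]]] _].
apply: (red_bound HK Hi).
exact: (choose_rs (Q := deg_le n) (R := fun p r => K (fun w => p w - r w) /\ forall w, w \notin Ws -> r w = 0)).
Qed.

Lemma lin_comb_mon (c : nat -> F) (Ws : seq W) w : uniq Ws ->
  lin_comb c (map (@nc_mon F X) Ws) w = if w \in Ws then c (index w Ws) else 0.
Proof.
elim: Ws c => [|x Ws IH] c /=; first by rewrite lin_comb_nil.
move=> /andP [Hx Hu]; rewrite lin_comb_cons IH // inE /nc_mon.
case: (w =P x) => [->|Hw] /=.
  by rewrite eqxx (negbTE Hx) mulr1 addr0.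
have /negbTE -> : x != w by apply/eqP => E; apply: Hw.
by rewrite mulr0 add0r.
Qed.

Lemma deg_le_mon n (u : W) : (size u <= n)%N -> deg_le n (nc_mon F u).
Proof.
move=> Hu w Hw; rewrite /nc_mon; case: eqP => // E; move: Hw; rewrite E ltnNge Hu //.
Qed.

Lemma In_map_mon n (Ws : seq W) : (forall u, u \in Ws -> (size u <= n)%N) ->
  forall p, List.In p (map (@nc_mon F X) Ws) -> deg_le n p.
Proof.
elim: Ws => [|x Ws IH] H p //= [<-|Hp].
  by apply: deg_le_mon; apply: H; rewrite inE eqxx.
by apply: IH => // u Hu; apply: H; rewrite inE Hu orbT.
Qed.

End Alg.

Section Alg.
Variables (F : fieldType) (X : finType).
Local Open Scope ring_scope.
Notation P := (ncpoly F X).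
Notation W := (word X).
Notation z0 := (@nc_zero F X).
Notation mon := (@nc_mon F X).

Lemma is_ideal_fs : is_ideal (@fin_supp F X).
Proof.
split => //.
- by exists [::] => w.
- by move=> p q; apply: fin_supp_add.
- by move=> p q; apply: fin_supp_mul.
- by move=> p q; apply: fin_supp_mul.
Qed.

Variable S : W -> Prop.

Lemma gen_ideal_is_ideal : is_ideal (gen_ideal (F:=F) S).
Proof.
split.
- move=> p Hp; apply: Hp; first exact: is_ideal_fs.
  by move=> u _; apply: fin_supp_mon.
- by move=> K HK _; apply: K_zero HK.
- by move=> p q Hp Hq K HK HS; case: (HK) => _ _ H _ _; apply: H; [exact: Hp HK HS | exact: Hq HK HS].
- by move=> p q Hp Hq K HK HS; case: (HK) => _ _ _ H _; apply: H => //; exact: Hq HK HS.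
- by move=> p q Hp Hq K HK HS; case: (HK) => _ _ _ _ H; apply: H => //; exact: Hp HK HS.
Qed.

Definition normal (w : W) : Prop := forall a s b, w = a ++ s ++ b -> ~ S s.

Lemma normal_catl (a b : W) : normal (a ++ b) -> normal a.
Proof. by move=> H x s y E; apply: (H x s (y ++ b)); rewrite E -!catA. Qed.

Lemma normal_catr (a b : W) : normal (a ++ b) -> normal b.
Proof. by move=> H x s y E; apply: (H (a ++ x) s y); rewrite E -!catA. Qed.

Lemma normal_notS (u : W) : normal u -> ~ S u.
Proof. by move=> H; apply: (H [::] u [::]); rewrite cats0. Qed.

Definition NW (n : nat) : seq W := filter (fun w => bdec (normal w)) (words_upto X n).

Lemma uniq_NW n : uniq (NW n).
Proof. by apply: filter_uniq; apply: uniq_words_upto. Qed.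

Lemma mem_NW n w : w \in NW n <-> normal w /\ (size w <= n)%N.
Proof.
rewrite mem_filter mem_words_upto; split.
  by move=> /andP [/bdecP H1 H2].
by move=> [H1 H2]; rewrite H2 andbT; apply/bdecP.
Qed.

Lemma NW_mono n m : (n <= m)%N -> (size (NW n) <= size (NW m))%N.
Proof.
move=> Hnm; apply: uniq_leq_size; first exact: uniq_NW.
by move=> w /mem_NW [H1 H2]; apply/mem_NW; split => //; apply: leq_trans Hnm.
Qed.

Lemma mon_in_J (w : W) : ~ normal w -> gen_ideal (F:=F) S (mon w).
Proof.
move=> Hn.
have [a [s [b [E Hs]]]] : exists a s b, w = a ++ s ++ b /\ S s.
  apply: NNPP => H; apply: Hn => a s b E Hs; apply: H; by exists a, s, b.
have -> : mon w = nc_mul (mon a) (nc_mul (mon s) (mon b)) by rewrite !mon_cat E.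
case: gen_ideal_is_ideal => _ _ _ Hl Hr.
apply: Hl; first exact: fin_supp_mon.
apply: Hr; last exact: fin_supp_mon.
by move=> K HK HS; apply: HS.
Qed.

Lemma dim_J_ub n : (quot_filt_dim (gen_ideal (F:=F) S) n <= size (NW n))%N.
Proof.
apply: dim_ub; first exact: gen_ideal_is_ideal.
move=> p Hp.
pose Wb := filter (fun w => ~~ bdec (normal w)) (words_upto X n).
have HWb : uniq Wb by apply: filter_uniq; apply: uniq_words_upto.
exists (fun w => if bdec (normal w) then p w else 0); split.
  apply: (K_ext (K_lin_comb gen_ideal_is_ideal (fun i => p (nth [::] Wb i)) (qs := map mon Wb) _)).
    move=> i; rewrite size_map => Hi; rewrite (nth_map [::]) //.
    apply: mon_in_J; move=> Hn.
    have := mem_nth [::] Hi; rewrite mem_filter => /andP [/negP H _]; apply: H.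
    by apply/bdecP.
  move=> w; rewrite lin_comb_mon // mem_filter mem_words_upto.
  case: (boolP (bdec (normal w))) => Hb /=.
    by rewrite subrr.
  case: (leqP (size w) n) => Hsz.
    by rewrite nth_index ?subr0 // mem_filter Hb mem_words_upto.
  by rewrite Hp // subr0.
move=> w Hw; case: (boolP (bdec (normal w))) => // Hb.
apply: deg_le_out Hp _; move: Hw; apply: contra; rewrite mem_words_upto => H.
by apply/mem_NW; split => //; apply/bdecP.
Qed.

Definition K0 (p : P) : Prop := fin_supp p /\ forall w, normal w -> p w = 0.

Lemma K0_ideal : is_ideal K0.
Proof.
split.
- by move=> p [].
- by split; [exists [::] | ].
- move=> p q [H1 H2] [H3 H4]; split; first exact: fin_supp_add.
  by move=> w Hw; rewrite /nc_add H2 // H4 // addr0.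
- move=> p q Hp [H3 H4]; split; first exact: fin_supp_mul.
  move=> w Hw; rewrite /nc_mul big1 // => i _; rewrite H4 ?mulr0 //.
  by apply: (normal_catr (a := take i w)); rewrite cat_take_drop.
- move=> p q [H1 H2] Hq; split; first exact: fin_supp_mul.
  move=> w Hw; rewrite /nc_mul big1 // => i _; rewrite H2 ?mul0r //.
  by apply: (normal_catl (b := drop i w)); rewrite cat_take_drop.
Qed.

Lemma J_K0 p : gen_ideal (F:=F) S p -> K0 p.
Proof.
move=> Hp; apply: Hp; first exact: K0_ideal.
move=> u Su; split; first exact: fin_supp_mon.
move=> w Hw; rewrite /nc_mon; case: eqP => // E; exfalso.
by apply: (normal_notS Hw); rewrite E.
Qed.

Lemma dim_J_lb n : (size (NW n) <= quot_filt_dim (gen_ideal (F:=F) S) n)%N.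
Proof.
rewrite -(size_map mon); apply: dim_lb; first exact: gen_ideal_is_ideal.
  by apply: In_map_mon => u /mem_NW [].
move=> c /J_K0 [_ H] i; rewrite size_map => Hi.
have := H (nth [::] (NW n) i).
rewrite lin_comb_mon ?uniq_NW // mem_nth // index_uniq ?uniq_NW //; apply.
by have /mem_NW [] := mem_nth [::] Hi.
Qed.

Lemma dim_J n : quot_filt_dim (gen_ideal (F:=F) S) n = size (NW n).
Proof. by apply/eqP; rewrite eqn_leq dim_J_ub dim_J_lb. Qed.

End Alg.

Section Alg.
Variables (F : fieldType) (X : finType).
Local Open Scope ring_scope.
Notation P := (ncpoly F X).
Notation W := (word X).
Notation z0 := (@nc_zero F X).
Notation mon := (@nc_mon F X).

Variable lt : W -> W -> Prop.
Hypothesis Hlt : monomial_order lt.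

Definition le (u v : W) := u = v \/ lt u v.

Lemma le_trans u v w : le u v -> le v w -> le u w.
Proof.
case: Hlt => _ Htr _ _ _.
by move=> [->|H1] [<-|H2]; [left | right | right | right; apply: Htr H2].
Qed.

Lemma list_max (l : seq W) : l <> [::] -> exists m, m \in l /\ forall x, x \in l -> le x m.
Proof.
case: Hlt => Hirr Htr Htot _ _.
elim: l => [|x l IH] // _.
case: l IH => [|y l] IH.
  by exists x; split; rewrite ?inE ?eqxx // => z; rewrite inE => /eqP ->; left.
have [m [Hm Hmax]] : exists m, m \in y :: l /\ forall x, x \in y :: l -> le x m by apply: IH.
case: (Htot x m) => [Hxm|Exm|Hmx].
- exists m; split; first by rewrite inE Hm orbT.
  by move=> z; rewrite inE => /orP [/eqP ->|Hz]; [right | apply: Hmax].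
- exists x; split; first by rewrite inE eqxx.
  by move=> z; rewrite inE => /orP [/eqP ->|Hz]; [left | rewrite Exm; apply: Hmax].
- exists x; split; first by rewrite inE eqxx.
  move=> z; rewrite inE => /orP [/eqP ->|Hz]; first by left.
  by apply: le_trans (Hmax z Hz) _; right.
Qed.

Lemma supp_max (g : P) : fin_supp g -> (exists w, g w <> 0) ->
  exists m, g m <> 0 /\ forall u, g u <> 0 -> le u m.
Proof.
move=> [s Hs] [w Hw].
have Hne : [seq u <- s | g u != 0] <> [::].
  move=> E; have : w \in [seq u <- s | g u != 0].
    rewrite mem_filter; apply/andP; split; first by apply/eqP.
    by apply: contraT => /Hs.
  by rewrite E.
have [m [Hm Hmax]] := list_max Hne.
move: Hm; rewrite mem_filter => /andP [/eqP Hm _].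
exists m; split => // u Hu; apply: Hmax; rewrite mem_filter; apply/andP; split; first by apply/eqP.
by apply: contraT => /Hs.
Qed.

Section Red.
Variable I : P -> Prop.
Hypothesis HI : is_ideal I.
Notation S := (lead_set lt I).

Lemma dim_I_lb n : (size (NW S n) <= quot_filt_dim I n)%N.
Proof.
rewrite -(size_map mon); apply: dim_lb HI _ _.
  by apply: In_map_mon => u /mem_NW [].
move=> c Hc i; rewrite size_map => Hi.
apply: NNPP => Hci.
set g := lin_comb c (map mon (NW S n)) in Hc.
have Hg : forall u, g u = if u \in NW S n then c (index u (NW S n)) else 0.
  by move=> u; rewrite /g lin_comb_mon // uniq_NW.
have Hex : exists w, g w <> 0.
  by exists (nth [::] (NW S n) i); rewrite Hg mem_nth // index_uniq // uniq_NW.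
have [m [Hm Hmax]] := supp_max (K_fs HI Hc) Hex.
have : lead_set lt I m.
  exists g; split => //; split; first by apply/eqP.
  move=> w /eqP Hw Hne; case: (Hmax w Hw) => // E; by case: Hne.
move: Hm; rewrite Hg; case: ifP => [/mem_NW [Hn _] _|_ []//].
exact: normal_notS Hn.
Qed.


Definition Good (p r : P) : Prop :=
  fin_supp r /\ I (fun w => p w - r w) /\
  forall u, r u <> 0 -> normal S u /\ exists v, p v <> 0 /\ le u v.

Lemma h_at (g : P) (a b t : W) :
  nc_mul (mon a) (nc_mul g (mon b)) (a ++ t ++ b) = g t.
Proof.
rewrite mul_monl take_size_cat // eqxx drop_size_cat // mul_monr.
by rewrite size_cat addnK drop_size_cat // eqxx take_size_cat.
Qed.

Lemma h_supp (g : P) (a b u : W) :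
  nc_mul (mon a) (nc_mul g (mon b)) u <> 0 -> exists t, u = a ++ t ++ b /\ g t <> 0.
Proof.
rewrite mul_monl; case: eqP => // Ha; rewrite mul_monr; case: eqP => // Hb Hg.
exists (take (size (drop (size a) u) - size b) (drop (size a) u)); split => //.
set v := drop (size a) u in Hb Hg *; set k := (size v - size b)%N in Hb Hg *.
have -> : take k v ++ b = v by rewrite -[b in _ ++ b]Hb cat_take_drop.
by rewrite /v -[a in a ++ _]Ha cat_take_drop.
Qed.

Lemma step w :
  (forall w', lt w' w -> forall p, fin_supp p -> (forall u, p u <> 0 -> le u w') -> exists r, Good p r) ->
  forall p, fin_supp p -> (forall u, p u <> 0 -> lt u w) -> exists r, Good p r.
Proof.
move=> IH p Hp Hsupp.
case: (classic (exists u, p u <> 0)) => Hex.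
  have [m [Hm Hmax]] := supp_max Hp Hex.
  exact: (IH m (Hsupp m Hm) p Hp Hmax).
exists z0; split; first by exists [::].
split; first by apply: (K_zero' HI) => u; rewrite /nc_zero subr0; apply: NNPP => H; apply: Hex; exists u.
by move=> u; rewrite /nc_zero.
Qed.

Lemma reduce_main w : forall p, fin_supp p -> (forall u, p u <> 0 -> le u w) -> exists r, Good p r.
Proof.
case: (Hlt) => Hirr Htr Htot Hwf Hcomp.
elim/(well_founded_ind Hwf): w => w IH p Hp Hsupp.
have Hst := step IH.
case: (classic (p w = 0)) => Hpw.
  apply: Hst => // u Hu; case: (Hsupp u Hu) => // E; by rewrite E in Hu.
case: (classic (normal S w)) => Hn.
  pose p' := fun u => p u - (if u == w then p w else 0).
  have Hp' : fin_supp p'.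
    case: Hp => s Hs; exists s => u Hu; rewrite /p' Hs //; case: eqP => [E|]; last by rewrite subr0.
    by rewrite -E Hs // subrr.
  have [r' [Hr'1 [Hr'2 Hr'3]]] : exists r, Good p' r.
    apply: Hst => // u; rewrite /p'; case: eqP => [->|Hne]; first by rewrite subrr.
    rewrite subr0 => Hu; case: (Hsupp u Hu) => // E.
  exists (fun u => r' u + (if u == w then p w else 0)); split.
    case: Hr'1 => s0 Hs0; exists (w :: s0) => u; rewrite inE negb_or => /andP [/negbTE -> H2].
    by rewrite Hs0 // addr0.
  split.
    apply: (K_ext Hr'2) => u; rewrite /p'; case: eqP => _; rewrite ?subr0 ?addr0 //.
    by rewrite opprD addrA addrAC.
  move=> u; case: (u =P w) => [->|Hne] Hu; first by split => //; exists w; split => //; left.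
  rewrite addr0 in Hu; have [Hnu [v [Hv Huv]]] := Hr'3 u Hu; split => //.
  exists v; split => //; move: Hv; rewrite /p'; case: eqP => [->|_]; first by rewrite subrr.
  by rewrite subr0.
have [a [s [b [E Hs]]]] : exists a s b, w = a ++ s ++ b /\ S s.
  apply: NNPP => H; apply: Hn => a s b E Hs; apply: H; by exists a, s, b.
case: Hs => g [Ig [Hgs Hglead]].
pose h := nc_mul (mon a) (nc_mul g (mon b)).
have Ih : I h.
  case: (HI) => _ _ _ Hl Hr; apply: Hl; first exact: fin_supp_mon.
  by apply: Hr => //; apply: fin_supp_mon.
have Hhw : h w = g s by rewrite /h E h_at.
have Hhsupp : forall u, h u <> 0 -> le u w.
  move=> u /h_supp [t [-> Hgt]]; rewrite E.
  case: (t =P s) => [->|Hts]; first by left.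
  right; apply: Hcomp; apply: Hglead => //; by apply/eqP.
pose c := p w / g s.
pose p'' := fun u => p u - c * h u.
have Hp'' : fin_supp p''.
  have [s1 H1] := Hp; have [s2 H2] := K_fs HI Ih.
  exists (s1 ++ s2) => u; rewrite mem_cat negb_or => /andP [h1 h2].
  by rewrite /p'' H1 // H2 // mulr0 subrr.
have [r [Hr1 [Hr2 Hr3]]] : exists r, Good p'' r.
  apply: Hst => // u Hu.
  have Hle : le u w.
    case: (classic (p u = 0)) => Hpu; last exact: Hsupp.
    apply: Hhsupp => Hhu; apply: Hu; by rewrite /p'' Hpu Hhu mulr0 subrr.
  case: Hle => // Euw; exfalso; apply: Hu; rewrite Euw /p'' Hhw /c.
  by rewrite divfK ?subrr //; apply/eqP.
exists r; split => //; split.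
  apply: (K_ext (K_add HI Hr2 (K_scale HI c Ih))) => u.
  by rewrite /p'' addrAC subrK.
move=> u Hu; have [Hnu [v [Hv Huv]]] := Hr3 u Hu; split => //.
exists w; split => //; apply: le_trans Huv _.
case: (classic (p v = 0)) => Hpv; last exact: Hsupp.
apply: Hhsupp => Hhv; apply: Hv; by rewrite /p'' Hpv Hhv mulr0 subrr.
Qed.

Lemma dim_I_ub n B :
  (n <= B)%N -> (forall u v, (size v <= n)%N -> lt u v -> (size u <= B)%N) ->
  (quot_filt_dim I n <= size (NW S B))%N.
Proof.
move=> HnB HB; apply: dim_ub HI _ => p Hp.
have Hfs : fin_supp p by exists (words_upto X n) => w; apply: deg_le_out.
have [r [Hr1 [Hr2 Hr3]]] : exists r, Good p r.
  case: (classic (exists u, p u <> 0)) => Hex.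
    have [m [Hm Hmax]] := supp_max Hfs Hex.
    exact: (reduce_main Hfs Hmax).
  exists z0; split; first by exists [::].
  split; first by apply: (K_zero' HI) => u; rewrite /nc_zero subr0; apply: NNPP => H; apply: Hex; exists u.
  by move=> u; rewrite /nc_zero.
exists r; split => // u Hu; apply: NNPP => Hru.
have [Hnu [v [Hv Huv]]] := Hr3 u Hru.
move/negP: Hu; apply; apply/mem_NW; split => //.
have Hvn : (size v <= n)%N by rewrite leqNgt; apply/negP => /Hp.
case: Huv => [->|Huv]; first exact: leq_trans HnB.
exact: HB Huv.
Qed.

End Red.
End Alg.

From Coquelicot Require Import Hierarchy Rcomplements.
Section Real.
Local Open Scope R_scope.

Lemma ln0 : ln 0 = 0.
Proof. unfold ln; destruct (Rlt_dec 0 0) as [H|H]; [exfalso; exact: (Rlt_irrefl 0 H) | reflexivity]. Qed.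

Lemma ln_nat_ge0 (x : nat) : 0 <= ln (INR x).
Proof.
case: x => [|x]; first by rewrite [INR 0]/= ln0; lra.
rewrite -ln_1; apply: ln_le; first lra.
rewrite S_INR; have := pos_INR x; lra.
Qed.

Lemma ln_nat_mono (x y : nat) : (x <= y)%N -> ln (INR x) <= ln (INR y).
Proof.
case: x => [|x] Hxy; first by rewrite [INR 0]/= ln0; apply: ln_nat_ge0.
apply: ln_le; first by apply: lt_0_INR; apply/ltP.
by apply: le_INR; apply/leP.
Qed.

Lemma ln_nat_pos (n : nat) : (2 <= n)%N -> 0 < ln (INR n).
Proof.
move=> Hn; rewrite -ln_1; apply: ln_increasing; first lra.
have : INR 2 <= INR n by apply: le_INR; apply/leP.
rewrite /= ; lra.
Qed.

Lemma INR_muln (m n : nat) : INR (m * n)%N = INR m * INR n.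
Proof. by rewrite -multE mult_INR. Qed.

Lemma INR_expn (m n : nat) : INR (m ^ n)%N = INR m ^ n.
Proof. elim: n => [|n IH]; first by []. by rewrite expnS INR_muln IH. Qed.

Definition gk (dd : nat -> nat) (n : nat) : R := Rdiv (ln (INR (dd n))) (ln (INR n)).

Lemma gk_ge0 dd n : (2 <= n)%N -> 0 <= gk dd n.
Proof.
move=> Hn; rewrite /gk /Rdiv; apply: Rmult_le_pos; first exact: ln_nat_ge0.
by apply: Rlt_le; apply: Rinv_0_lt_compat; apply: ln_nat_pos.
Qed.

Lemma gk_mono (d1 d2 : nat -> nat) : (forall n, (d1 n <= d2 n)%N) ->
  Rbar_le (LimSup_seq (gk d1)) (LimSup_seq (gk d2)).
Proof.
move=> H; apply: LimSup_le; exists 2%N => n /leP Hn.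
rewrite /gk /Rdiv; apply: Rmult_le_compat_r; last exact: ln_nat_mono.
by apply: Rlt_le; apply: Rinv_0_lt_compat; apply: ln_nat_pos.
Qed.

Lemma LimSup_correct u : is_LimSup_seq u (LimSup_seq u).
Proof. by case: (ex_LimSup_seq u) => l Hl; rewrite (is_LimSup_seq_unique _ _ Hl). Qed.

Lemma gk_LimSup_ge0 dd : Rbar_le (Rbar.Finite 0) (LimSup_seq (gk dd)).
Proof.
rewrite -(LimSup_seq_const 0); apply: LimSup_le; exists 2%N => n /leP Hn.
exact: gk_ge0.
Qed.

Lemma big_n (K : R) : exists n1 : nat, forall n, (n1 <= n)%N -> K <= ln (INR n).
Proof.
have [n1 Hn1] := INR_archimed 1 (exp K) Rlt_0_1.
exists n1 => n Hn; rewrite Rmult_1_r in Hn1.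
rewrite -(ln_exp K); apply: ln_le; first exact: exp_pos.
apply: Rle_trans (Rlt_le _ _ Hn1) _; apply: le_INR; exact/leP.
Qed.

Lemma limsup_bound (dA dJ : nat -> nat) (d M : nat) :
  (1 <= d)%N -> (1 <= M)%N ->
  (forall n, (1 <= n)%N -> (dA n <= dJ (M * n ^ d))%N) ->
  Rbar_le (LimSup_seq (gk dA)) (Rbar_mult (INR d) (LimSup_seq (gk dJ))).
Proof.
move=> Hd HM Hbound.
have Hd0 : 0 < INR d by apply: lt_0_INR; apply/ltP.
have HM0 : 0 < INR M by apply: lt_0_INR; apply/ltP.
have HL0 := gk_LimSup_ge0 dJ.
have HJ := LimSup_correct (gk dJ).
case EL: (LimSup_seq (gk dJ)) HL0 HJ => [l| |] //= Hl0 HJ; last first.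
  case: Rle_dec => H; last lra. case: Rle_lt_or_eq_dec => H2; last lra. by case: (LimSup_seq (gk dA)).
have key : forall eps, 0 < eps -> Rbar_le (LimSup_seq (gk dA)) (Rbar.Finite ((l + eps) * (INR d + eps))).
  move=> eps Heps.
  have [_ [K0 HK0]] := HJ (mkposreal eps Heps).
  have [n1 Hn1] := big_n (ln (INR M) / eps).
  rewrite -LimSup_seq_const; apply: LimSup_le.
  exists (maxn 2 (maxn K0 n1)) => n /leP Hn.
  have Hn2 : (2 <= n)%N by apply: leq_trans Hn; apply: leq_maxl.
  have HnK : (K0 <= n)%N by apply: leq_trans Hn; apply: leq_trans (leq_maxr _ _); apply: leq_maxl.
  have Hnn1 : (n1 <= n)%N by apply: leq_trans Hn; apply: leq_trans (leq_maxr _ _); apply: leq_maxr.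
  set m := (M * n ^ d)%N.
  have Hnm : (n <= m)%N.
    rewrite /m; apply: leq_trans (leq_pmull _ HM).
    by rewrite -{1}(expn1 n) leq_pexp2l // ltnW.
  have Hlnn := ln_nat_pos Hn2.
  have Hlnm : ln (INR m) = ln (INR M) + INR d * ln (INR n).
    rewrite /m INR_muln INR_expn ln_mult //; last by apply: pow_lt; apply: lt_0_INR; apply/ltP; apply: leq_trans Hn2.
    by rewrite ln_pow //; apply: lt_0_INR; apply/ltP; apply: leq_trans Hn2.
  have Hlnm0 : 0 < ln (INR m) by apply: ln_nat_pos; apply: leq_trans Hnm.
  have Hb : gk dJ m < l + eps by apply: HK0; apply/leP; apply: leq_trans Hnm.
  have Hb0 : 0 <= gk dJ m by apply: gk_ge0; apply: leq_trans Hnm.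
  have He : ln (INR m) / ln (INR n) <= INR d + eps.
    rewrite Hlnm; have := Hn1 n Hnn1 => H1.
    have HlnM := ln_nat_ge0 M.
    apply: (Rmult_le_reg_r (ln (INR n))) => //.
    rewrite /Rdiv Rmult_assoc Rinv_l; last lra.
    have : ln (INR M) <= eps * ln (INR n).
      have := Rmult_le_compat_l eps _ _ (Rlt_le _ _ Heps) H1.
      have -> : eps * (ln (INR M) / eps) = ln (INR M) by field; lra.
      by [].
    lra.
  have He0 : 0 <= ln (INR m) / ln (INR n).
    by rewrite /Rdiv; apply: Rmult_le_pos; lra || (apply: Rlt_le; apply: Rinv_0_lt_compat; lra).
  have Hstep : gk dA n <= gk dJ m * (ln (INR m) / ln (INR n)).
    rewrite /gk /Rdiv; have -> : ln (INR (dJ m)) * / ln (INR m) * (ln (INR m) * / ln (INR n)) =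
       ln (INR (dJ m)) * / ln (INR n) by field; lra.
    apply: Rmult_le_compat_r; first by apply: Rlt_le; apply: Rinv_0_lt_compat.
    by apply: ln_nat_mono; apply: Hbound; apply: leq_trans Hn2.
  apply: Rle_trans Hstep _.
  apply: Rle_trans (Rmult_le_compat_r _ _ _ He0 (Rlt_le _ _ Hb)) _.
  apply: Rmult_le_compat_l => //; lra.
case E: (LimSup_seq (gk dA)) key => [r| |] key /=; last by [].
  apply: Rnot_lt_le => Hlt.
  set dl := INR d * l in Hlt.
  set del := (r - dl) / (2 * (l + INR d + 1)).
  have Hdel : 0 < del by rewrite /del; apply: Rdiv_lt_0_compat; lra.
  have Hdel2 : del * (l + INR d + 1) = (r - dl) / 2 by rewrite /del; field; lra.
  set e := Rmin 1 del.
  have He0 : 0 < e by apply: Rmin_glb_lt; lra.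
  have He1 : e <= 1 by apply: Rmin_l.
  have He2 : e <= del by apply: Rmin_r.
  have := key e He0; rewrite /= => Hk.
  have H3 : e * (l + INR d + 1) <= (r - dl) / 2.
    rewrite -Hdel2; apply: Rmult_le_compat_r => //; lra.
  have H4 : (l + e) * (INR d + e) <= dl + e * (l + INR d + 1).
    rewrite /dl; nra.
  lra.
by have := key 1 Rlt_0_1.
Qed.

End Real.


Section PolyB.
Local Open Scope R_scope.
Lemma sum_abs_ge0 (a : nat -> R) d : 0 <= sum_f_R0 (fun i => Rabs (a i)) d.
Proof.
elim: d => [|d IH] /=; first exact: Rabs_pos.
have := Rabs_pos (a d.+1); lra.
Qed.

Lemma poly_bound (a : nat -> R) d x y : 0 <= x -> x <= y -> 1 <= y ->
  real_poly_eval a d x <= sum_f_R0 (fun i => Rabs (a i)) d * y ^ d.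
Proof.
move=> Hx Hxy Hy.
have Hterm : forall k, a k * x ^ k <= Rabs (a k) * y ^ k.
  move=> k; apply: Rle_trans (Rmult_le_compat_r _ _ _ (pow_le _ k Hx) (Rle_abs (a k))) _.
  by apply: Rmult_le_compat_l; [apply: Rabs_pos | apply: pow_incr].
rewrite /real_poly_eval; elim: d => [|d IH] /=; first by have := Hterm 0%N; rewrite /=.
have Hyd : y ^ d <= y * y ^ d.
  have := pow_le y d ltac:(lra); nra.
have := Hterm d.+1; rewrite /= => H1.
have := sum_abs_ge0 a d => H2.
have : sum_f_R0 (fun i => Rabs (a i)) d * y ^ d <= sum_f_R0 (fun i => Rabs (a i)) d * (y * y ^ d).
  by apply: Rmult_le_compat_l.
lra.
Qed.
End PolyB.

Theorem theorem1 (F : fieldType) (X : finType) (I : ncpoly F X -> Prop)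
  (lt : word X -> word X -> Prop) (a : nat -> R) (d : nat) (N : nat) :
  is_ideal I ->
  monomial_order lt ->
  (1 <= d)%N ->
  a d <> R0 ->
  (forall u v : word X, (N <= size u)%N -> lt u v ->
     Rle (INR (size u)) (real_poly_eval a d (INR (size v)))) ->
  Rbar_le (GKdim (assoc_monomial_ideal lt I)) (GKdim I) /\
  Rbar_le (GKdim I) (Rbar_mult (INR d) (GKdim (assoc_monomial_ideal lt I))).
Proof.
move=> HI Hlt Hd _ Hf.
have EJ : GKdim (assoc_monomial_ideal lt I) = LimSup_seq (gk (quot_filt_dim (assoc_monomial_ideal lt I))) by [].
have EI : GKdim I = LimSup_seq (gk (quot_filt_dim I)) by [].
have dJ : forall n, quot_filt_dim (assoc_monomial_ideal lt I) n = size (NW (lead_set lt I) n).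
  by move=> n; apply: dim_J.
rewrite EJ EI; split.
  apply: gk_mono => n; rewrite dJ; exact: dim_I_lb.
pose C := sum_f_R0 (fun i => Rabs (a i)) d.
have [M0 HM0] := INR_archimed 1 C Rlt_0_1.
rewrite Rmult_1_r in HM0.
pose M := maxn 1 (maxn N M0).
have HM1 : (1 <= M)%N by apply: leq_maxl.
apply: (limsup_bound Hd HM1) => n Hn.
rewrite dJ; apply: dim_I_ub => //.
  have Hnd : (n <= n ^ d)%N by rewrite -{1}(expn1 n) leq_pexp2l.
  by apply: leq_trans Hnd _; apply: leq_pmull.
move=> u v Hv Huv.
have Hnd1 : (1 <= n ^ d)%N by rewrite expn_gt0 Hn.
have HNM : (N <= M * n ^ d)%N.
  apply: leq_trans (leq_pmulr _ Hnd1); rewrite /M.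
  by apply: leq_trans (leq_maxr _ _); apply: leq_maxl.
case: (leqP N (size u)) => HNu; last by apply: leq_trans (ltnW HNu) HNM.
apply/leP; apply: INR_le.
apply: Rle_trans (Hf u v HNu Huv) _.
have Hn1 : Rle 1 (INR n) by change (Rle (INR 1) (INR n)); apply: le_INR; apply/leP.
have Hvn : Rle (INR (size v)) (INR n) by apply: le_INR; apply/leP.
apply: Rle_trans (poly_bound a d (pos_INR _) Hvn Hn1) _.
rewrite INR_muln INR_expn.
apply: Rmult_le_compat_r; first by apply: pow_le; lra.
apply: Rle_trans (Rlt_le _ _ HM0) _; apply: le_INR; apply/leP.
by rewrite /M; apply: leq_trans (leq_maxr _ _); apply: leq_maxr.
Qed.
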